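(* Let $\{\Delta_1,\dots,\Delta_r\}$ be a nef-partition of a reflexive polytope $\Delta$ with dual nef-partition $\{\nabla_1,\dots,\nabla_r\}$, let $i\in J\subset I=\{1,\dots,r\}$. Then a nonzero lattice point $w\in M$ lies in the relative interior of $\Delta_i+\sum_{j\in J}\Delta_j$ (where $\Delta_i$ appears twice) if and only if $w\in\Delta_i^0$ and $0$ lies in the relative interior of $\sum_{j\notin J}\nabla_j(w)$ (an empty sum being $\{0\}$). Moreover, in this case $$\dim\Big(\Delta_i+\sum_{j\in J}\Delta_j\Big)+\dim\Big(\sum_{j\notin J}\nabla_j(w)\Big)=d.$$
   Context: Let $M\cong\mathbb Z^d$, $N=\mathrm{Hom}(M,\mathbb Z)$, $\langle\cdot,\cdot\rangle$ the pairing. A $d$-dimensional lattice polytope $\Delta\subset M_{\mathbb R}$ is reflexive if $\Delta=\{x:\langle x,e_k\rangle\ge-1,\ k=1,\dots,n\}$ with $e_k\in N$ the primitive inward facet normals. A nef-partition is a Minkowski decomposition $\Delta=\Delta_1+\dots+\Delta_r$ into lattice polytopes with $\varphi_j(e_k)\in\{0,1\}$ for all $j,k$, $\varphi_j(y)=-\min_{x\in\Delta_j}\langle x,y\rangle$; the dual nef-partition consists of $\nabla_j=\mathrm{Conv}(\{0\}\cup\{e_k:\varphi_j(e_k)=1\})\subset N_{\mathbb R}$, and $\nabla^*=\mathrm{Conv}(\Delta_1\cup\dots\cup\Delta_r)$ is a reflexive polytope. Put $\mathcal V(\nabla^* )=\partial\nabla^*\cap M$ and $\Delta_i^0=\Delta_i\cap\mathcal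 V(\nabla^* )$. For $w\in M$, $\nabla_j(w)$ denotes the face of $\nabla_j$ on which $\langle w,\cdot\rangle$ attains its minimum. *)

(* Defs.v *)
(* points of M_R = R^d (and of N_R) are row vectors 'rV[R]_d,
   R : realType.  M and N = Hom(M,Z) are both identified with Z^d via a basis
   and its dual basis, so that <x,y> = sum_k x_k y_k. *)
From HB Require Import structures.
From mathcomp Require Import all_boot all_order all_algebra.
From mathcomp Require Import reals.
Set Implicit Arguments. Unset Strict Implicit. Unset Printing Implicit Defensive.
Import Order.TTheory GRing.Theory Num.Theory.
Local Open Scope ring_scope.

Section Polytopes.
Variables (R : realType) (d : nat).
Local Notation vec := 'rV[R]_d.

Definition pset := vec -> Prop.

Definition pairing (x y : vec) : R := \sum_(k < d) x 0 k * y 0 k.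

Definition lattice (x : vec) : Prop := forall k, x 0 k \is a Num.int.

Definition primitive (e : vec) : Prop :=
  lattice e /\ forall t : R, 0 < t -> t < 1 -> ~ lattice (t *: e).

Definition conv (V : seq vec) : pset := fun x =>
  exists l : 'I_(size V) -> R, (forall i, 0 <= l i) /\ \sum_i l i = 1 /\
    x = \sum_i l i *: nth 0 V i.

Definition lattice_polytope (P : pset) : Prop :=
  exists V : seq vec, (forall v, v \in V -> lattice v) /\ forall x, P x <-> conv V x.

Definition msum2 (P Q : pset) : pset := fun x => exists p q, P p /\ Q q /\ x = p + q.
Definition msum (Ps : seq pset) : pset := foldr msum2 (fun x => x = 0) Ps.

Definition aff (P : pset) : pset := fun x =>
  exists (n : nat) (p : 'I_n -> vec) (l : 'I_n -> R),
    (forall i, P (p i)) /\ \sum_i l i = 1 /\ x = \sum_i l i *: p i.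

Definition ball (x : vec) (eps : R) : pset := fun y =>
  forall k, `|y 0 k - x 0 k| < eps.

Definition interior (P : pset) : pset := fun x =>
  exists2 eps : R, 0 < eps & forall y, ball x eps y -> P y.
Definition boundary (P : pset) : pset := fun x => P x /\ ~ interior P x.
Definition relint (P : pset) : pset := fun x =>
  P x /\ exists2 eps : R, 0 < eps & forall y, aff P y -> ball x eps y -> P y.

(* affine dimension: P has dimension n iff n is the maximal number m such that
   P contains m+1 affinely independent points p_0,...,p_m (i.e. the rank of the
   matrix with rows p_i - p_0 equals m). *)
Definition diffmx (m : nat) (p : 'I_m.+1 -> vec) : 'M[R]_(m, d) :=
  \matrix_(i < m, k < d) (p (lift ord0 i) 0 k - p ord0 0 k).
Definition affdim (P : pset) (n : nat) : Prop :=
  (exists p : 'I_n.+1 -> vec, (forall i, P (p i)) /\ \rank (diffmx p) = n) /\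
  (forall (m : nat) (p : 'I_m.+1 -> vec), (forall i, P (p i)) -> (\rank (diffmx p) <= n)%N).

(* phi_P(y) = c, where phi_P(y) = - min_{x in P} <x,y> *)
Definition phi_eq (P : pset) (y : vec) (c : R) : Prop :=
  (forall x, P x -> - c <= pairing x y) /\ (exists2 x, P x & pairing x y = - c).

Definition minface (P : pset) (w : vec) : pset := fun y =>
  P y /\ forall z, P z -> pairing w y <= pairing w z.

(* reflexive polytope with primitive inward facet normals e_1..e_n:
   P is a d-dimensional lattice polytope, P = {x : <x,e_k> >= -1 for all k},
   the e_k are pairwise distinct primitive lattice vectors, and each
   {x in P : <x,e_k> = -1} is a facet (of dimension d-1). *)
Definition reflexive_with_normals (P : pset) (e : seq vec) : Prop :=
  [/\ lattice_polytope P, affdim P d,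
      (forall x, P x <-> forall k, k \in e -> - 1 <= pairing x k),
      uniq e &
      forall k, k \in e ->
        primitive k /\ affdim (fun x => P x /\ pairing x k = - 1) d.-1].

Definition nef_partition (P : pset) (e : seq vec) (r : nat) (D : 'I_r -> pset) : Prop :=
  [/\ forall j, lattice_polytope (D j),
      (forall x, P x <-> msum [seq D j | j <- enum 'I_r] x) &
      forall j k, k \in e -> phi_eq (D j) k 0 \/ phi_eq (D j) k 1].

(* dual nef-partition: nabla_j = Conv({0} u {e_k : phi_j(e_k) = 1}) *)
Definition nabla (e : seq vec) (r : nat) (D : 'I_r -> pset) (j : 'I_r) : pset :=
  fun y => exists (l0 : R) (l : 'I_(size e) -> R),
    0 <= l0 /\ (forall k, 0 <= l k) /\ l0 + \sum_k l k = 1 /\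
    (forall k, l k != 0 -> phi_eq (D j) (nth 0 e k) 1) /\
    y = \sum_k l k *: nth 0 e k.

(* nabla^* = Conv(D_1 u ... u D_r) *)
Definition nabla_star (r : nat) (D : 'I_r -> pset) : pset := fun x =>
  exists (n : nat) (p : 'I_n -> vec) (l : 'I_n -> R),
    (forall i, exists j, D j (p i)) /\ (forall i, 0 <= l i) /\
    \sum_i l i = 1 /\ x = \sum_i l i *: p i.

(* Delta_i^0 = Delta_i n V(nabla-star), V(nabla-star) = boundary(nabla-star) n M *)
Definition Dzero (r : nat) (D : 'I_r -> pset) (i : 'I_r) : pset := fun x =>
  D i x /\ boundary (nabla_star D) x /\ lattice x.

End Polytopes.

(* Main.v *)
Require Import Defs.
From HB Require Import structures.
From mathcomp Require Import all_boot all_order all_algebra.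
From mathcomp Require Import boolp reals ring lra.
Import Order.TTheory GRing.Theory Num.Theory.
Local Open Scope ring_scope.
Set Implicit Arguments. Unset Strict Implicit. Unset Printing Implicit Defensive.

Section Basics.
Variable R : realType.

Section Pair.
Variable n : nat.
Local Notation vec := 'rV[R]_n.
Local Notation "<< x , y >>" := (pairing x y).

Lemma pairingC (x y : vec) : <<x, y>> = <<y, x>>.
Proof. by apply: eq_bigr => k _; rewrite mulrC. Qed.

Lemma pairingDl (x y z : vec) : <<x + y, z>> = <<x, z>> + <<y, z>>.
Proof. by rewrite /pairing -big_split; apply: eq_bigr => k _; rewrite mxE mulrDl. Qed.

Lemma pairingZl a (x z : vec) : <<a *: x, z>> = a * <<x, z>>.
Proof. by rewrite /pairing mulr_sumr; apply: eq_bigr => k _; rewrite mxE mulrA. Qed.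

Lemma pairingNl (x z : vec) : <<- x, z>> = - <<x, z>>.
Proof. by rewrite -scaleN1r pairingZl mulN1r. Qed.

Lemma pairingBl (x y z : vec) : <<x - y, z>> = <<x, z>> - <<y, z>>.
Proof. by rewrite pairingDl pairingNl. Qed.

Lemma pairing0l (z : vec) : <<0, z>> = 0.
Proof. by rewrite /pairing big1 // => k _; rewrite mxE mul0r. Qed.

Lemma pairingDr (x y z : vec) : <<z, x + y>> = <<z, x>> + <<z, y>>.
Proof. by rewrite !(pairingC z) pairingDl. Qed.
Lemma pairingZr a (x z : vec) : <<z, a *: x>> = a * <<z, x>>.
Proof. by rewrite !(pairingC z) pairingZl. Qed.
Lemma pairingNr (x z : vec) : <<z, - x>> = - <<z, x>>.
Proof. by rewrite !(pairingC z) pairingNl. Qed.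
Lemma pairingBr (x y z : vec) : <<z, x - y>> = <<z, x>> - <<z, y>>.
Proof. by rewrite !(pairingC z) pairingBl. Qed.
Lemma pairing0r (z : vec) : <<z, 0>> = 0.
Proof. by rewrite pairingC pairing0l. Qed.

Lemma pairing_suml I (s : seq I) (P : pred I) (F : I -> vec) y :
  <<\sum_(i <- s | P i) F i, y>> = \sum_(i <- s | P i) <<F i, y>>.
Proof.
elim/big_rec2: _ => [|i a b Pi IH]; first exact: pairing0l.
by rewrite pairingDl IH.
Qed.

Lemma pairing_sumr I (s : seq I) (P : pred I) (F : I -> vec) y :
  <<y, \sum_(i <- s | P i) F i>> = \sum_(i <- s | P i) <<y, F i>>.
Proof.
rewrite pairingC pairing_suml; apply: eq_bigr => i _; exact: pairingC.
Qed.

Lemma pairing_pos (b : vec) : b != 0 -> 0 < <<b, b>>.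
Proof.
move=> bn0.
have [k Hk] : exists k, b 0 k != 0.
  apply/existsP; apply: contraR bn0; rewrite negb_exists => /forallP H.
  apply/eqP/matrixP => i j; rewrite mxE (ord1 i); exact/eqP/negPn/H.
rewrite /pairing (bigD1 k) //= -expr2.
apply: ltr_wpDr; first by apply: sumr_ge0 => j _; rewrite -expr2 sqr_ge0.
by rewrite lt_def sqrf_eq0 Hk sqr_ge0.
Qed.

End Pair.

Definition ext (T : Type) m (c : T) (l : 'I_m -> T) (k : 'I_m.+1) : T :=
  if unlift ord0 k is Some k' then l k' else c.
Lemma ext0 T m (c : T) (l : 'I_m -> T) : ext c l ord0 = c.
Proof. by rewrite /ext unlift_none. Qed.
Lemma extS T m (c : T) (l : 'I_m -> T) (k : 'I_m) : ext c l (lift ord0 k) = l k.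
Proof. by rewrite /ext liftK. Qed.

Lemma farkas n : forall m (a : 'I_m -> 'rV[R]_n) (b : 'rV[R]_n),
 (exists2 l : 'I_m -> R, (forall k, 0 <= l k) & b = \sum_k l k *: a k) \/
 (exists z, (forall k, 0 <= pairing z (a k)) /\ pairing z b < 0).
Proof.
elim=> [|m IH] a b.
  case: (eqVneq b 0) => [->|bn0].
    by left; exists (fun _ => 0) => //; rewrite big_ord0.
  right; exists (-b); split => [[k]//|].
  by rewrite pairingNl oppr_lt0; exact: pairing_pos.
pose a0 := a ord0; pose a' := fun k : 'I_m => a (lift ord0 k).
have Ea : forall F : 'I_m.+1 -> 'rV[R]_n, \sum_k F k = F ord0 + \sum_(k < m) F (lift ord0 k).
  by move=> F; rewrite big_ord_recl.
case: (IH a' b) => [[l l0 ->]|[z [zpos zb]]].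
  left; exists (ext 0 l) => [k|].
    by case: (unliftP ord0 k) => [k' ->|->]; rewrite ?extS ?ext0.
  by rewrite Ea ext0 scale0r add0r; apply: eq_bigr => k _; rewrite extS.
case: (lerP 0 (pairing z a0)) => za0.
  right; exists z; split=> // k.
  by case: (unliftP ord0 k) => [k' ->|->]; [apply: zpos|].
pose al := pairing z a0.
have aln0 : al != 0 by rewrite ltr0_neq0.
pose a'' := fun k => al *: a' k - pairing z (a' k) *: a0.
pose b'' := al *: b - pairing z b *: a0.
case: (IH a'' b'') => [[mu mu0 Eb]|[z' [z'pos z'b]]].
  pose c0 := (pairing z b - \sum_k mu k * pairing z (a' k)) / al.
  left; exists (ext c0 mu) => [k|].
    case: (unliftP ord0 k) => [k' ->|->]; rewrite ?extS ?ext0 //.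
    rewrite /c0 mulr_le0 // ?invr_le0 ?(ltW za0) //.
    rewrite subr_le0; apply: le_trans (ltW zb) _.
    by apply: sumr_ge0 => q _; apply: mulr_ge0.
  rewrite Ea ext0.
  have -> : \sum_(k < m) ext c0 mu (lift ord0 k) *: a (lift ord0 k) = \sum_k mu k *: a' k.
    by apply: eq_bigr => k _; rewrite extS.
  apply: (scalerI aln0); rewrite scalerDr scalerA /c0 mulrCA mulfV // mulr1.
  have E2 : \sum_k mu k *: a'' k = al *: \sum_k mu k *: a' k - (\sum_k mu k * pairing z (a' k)) *: a0.
    rewrite scaler_sumr scaler_suml -sumrB; apply: eq_bigr => k _.
    by rewrite /a'' scalerBr !scalerA [al * _]mulrC.
  have E3 : al *: b = pairing z b *: a0 + (al *: \sum_k mu k *: a' k - (\sum_k mu k * pairing z (a' k)) *: a0).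
    by rewrite -E2 -Eb /b'' addrC subrK.
  by rewrite E3 scalerBl addrCA addrC.
right; exists (al *: z' - pairing z' a0 *: z); split.
  move=> k; case: (unliftP ord0 k) => [k' ->|->].
    have := z'pos k'; rewrite /a'' pairingBl !pairingZl /a' pairingBr !pairingZr.
    by rewrite [pairing z' a0 * _]mulrC.
  by rewrite pairingBl !pairingZl -/a0 -/al mulrC subrr.
move: z'b; rewrite /b'' pairingBl !pairingZl pairingBr !pairingZr.
by rewrite [pairing z' a0 * _]mulrC.
Qed.

End Basics.
Section Sep.
Variable R : realType.
Variable d : nat.
Local Notation vec := 'rV[R]_d.

Definition convT (T : finType) (p : T -> vec) : pset R d := fun x =>
  exists l : T -> R, (forall t, 0 <= l t) /\ \sum_t l t = 1 /\ x = \sum_t l t *: p t.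

Lemma pairing_row_mx n1 n2 (z : 'rV[R]_(n1 + n2)) (u : 'rV_n1) (v : 'rV_n2) :
  pairing z (row_mx u v) = pairing (lsubmx z) u + pairing (rsubmx z) v.
Proof.
rewrite /pairing big_split_ord; congr (_ + _); apply: eq_bigr => k _.
  by rewrite row_mxEl mxE.
by rewrite row_mxEr mxE.
Qed.

Lemma sum_enum_val (T : finType) (F : T -> vec) :
  \sum_(t : 'I_#|T|) F (enum_val t) = \sum_u F u.
Proof. by rewrite (reindex enum_val (onW_bij _ (enum_val_bij T))). Qed.
Lemma sum_enum_valR (T : finType) (F : T -> R) :
  \sum_(t : 'I_#|T|) F (enum_val t) = \sum_u F u.
Proof. by rewrite (reindex enum_val (onW_bij _ (enum_val_bij T))). Qed.

Lemma separation (T : finType) (p : T -> vec) x :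
  ~ convT p x -> exists y, forall t, pairing x y < pairing (p t) y.
Proof.
move=> nx.
pose one : 'rV[R]_1 := const_mx 1.
pose a := fun t : 'I_#|T| => row_mx (p (enum_val t)) one.
case: (farkas a (row_mx x one)) => [[l l0 Eb]|[z [zpos zb]]].
  exfalso; apply: nx; exists (fun u => l (enum_rank u)); split => //; split.
    have := congr1 (fun M : 'rV_(d + 1) => M 0 (rshift d ord0)) Eb.
    rewrite row_mxEr mxE summxE => ->; rewrite -(sum_enum_valR (fun u => l (enum_rank u))).
    by apply: eq_bigr => t _; rewrite enum_valK mxE row_mxEr mxE mulr1.
  apply/matrixP => i k; rewrite (ord1 i).
  have := congr1 (fun M : 'rV_(d + 1) => M 0 (lshift 1 k)) Eb.
  rewrite row_mxEl => ->; rewrite !summxE -(sum_enum_valR (fun u => (l (enum_rank u) *: p u) 0 k)).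
  by apply: eq_bigr => t _; rewrite enum_valK !mxE (unsplitK (inl _ k)).
exists (lsubmx z) => t.
have := zpos (enum_rank t); rewrite /a enum_rankK pairing_row_mx.
move: zb; rewrite pairing_row_mx => zb H.
rewrite pairingC [pairing (p t) _]pairingC.
have : pairing (lsubmx z) x + pairing (rsubmx z) one < pairing (lsubmx z) (p t) + pairing (rsubmx z) one.
  by apply: lt_le_trans zb H.
by rewrite ltrD2r.
Qed.

End Sep.
Section Msum.
Variable R : realType.
Variable d : nat.
Local Notation vec := 'rV[R]_d.
Local Notation pset := (pset R d).

Lemma msum_sum (I : eqType) (s : seq I) (F : I -> pset) (g : I -> vec) :
  (forall j, j \in s -> F j (g j)) -> msum (map F s) (\sum_(j <- s) g j).
Proof.
elim: s => [|j s IH] H /=; first by rewrite big_nil.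
rewrite big_cons; exists (g j), (\sum_(j <- s) g j); split; first by apply: H; exact: mem_head.
by split => //; apply: IH => j' Hj'; apply: H; rewrite inE Hj' orbT.
Qed.

Lemma msum_decomp (I : eqType) (s : seq I) (F : I -> pset) x :
  uniq s -> msum (map F s) x ->
  exists g : I -> vec, (forall j, j \in s -> F j (g j)) /\ x = \sum_(j <- s) g j.
Proof.
elim: s x => [|j s IH] x /=.
  by move=> _ ->; exists (fun _ => 0); rewrite big_nil.
case/andP => js us [p [q [Fp [Mq ->]]]].
have [g [Hg ->]] := IH q us Mq.
exists (fun j' => if j' == j then p else g j'); split.
  move=> j'; rewrite inE; case: eqP => [->|_] //=; exact: Hg.
rewrite big_cons eqxx; congr (_ + _); apply: eq_big_seq => j' Hj'.
by case: eqP => // E; rewrite -E Hj' in js.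
Qed.

Lemma msum_ind (I : eqType) (s : seq I) (F : I -> pset) (Q : vec -> Prop) :
  Q 0 -> (forall x y, Q x -> Q y -> Q (x + y)) ->
  (forall j x, j \in s -> F j x -> Q x) -> forall x, msum (map F s) x -> Q x.
Proof.
move=> Q0 QD; elim: s => [|j s IH] HF x /=; first by move->.
case=> [p [q [Fp [Mq ->]]]]; apply: QD; first by apply: (HF j) => //; exact: mem_head.
by apply: IH => // j' y Hj; apply: HF; rewrite inE Hj orbT.
Qed.

Lemma msum_phi (I : eqType) (s : seq I) (F : I -> pset) k (c : I -> R) :
  (forall j, j \in s -> phi_eq (F j) k (c j)) ->
  phi_eq (msum (map F s)) k (\sum_(j <- s) c j).
Proof.
elim: s => [|j s IH] H /=.
  rewrite big_nil; split; first by move=> x ->; rewrite pairing0l oppr0.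
  by exists 0; rewrite ?pairing0l ?oppr0.
have [H1 [x1 Fx1 E1]] := H j (mem_head _ _).
have [H2 [x2 Fx2 E2]] := IH (fun j' Hj => H j' (introT orP (or_intror Hj))).
rewrite big_cons; split.
  move=> x [p [q [Fp [Mq ->]]]]; rewrite pairingDl opprD.
  by apply: lerD; [apply: H1|apply: H2].
by exists (x1 + x2); [exists x1, x2|rewrite pairingDl E1 E2 opprD].
Qed.

Lemma phi_eq_uniq (P : pset) k c1 c2 : phi_eq P k c1 -> phi_eq P k c2 -> c1 = c2.
Proof.
move=> [H1 [x1 P1 E1]] [H2 [x2 P2 E2]].
apply: le_anti; apply/andP; split.
  by have := H2 _ P1; rewrite E1 lerN2.
by have := H1 _ P2; rewrite E2 lerN2.
Qed.

Lemma convT_sum (T1 T2 : finType) (p1 : T1 -> vec) (p2 : T2 -> vec) x :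
  msum2 (convT p1) (convT p2) x <-> convT (fun u : T1 * T2 => p1 u.1 + p2 u.2) x.
Proof.
split.
  move=> [y1 [y2 [[l1 [l10 [l11 ->]]] [[l2 [l20 [l21 ->]]] ->]]]].
  exists (fun u => l1 u.1 * l2 u.2); split; first by move=> u; apply: mulr_ge0.
  split.
    rewrite -(pair_big xpredT xpredT (fun a b => l1 a * l2 b)) /=.
    by rewrite -[RHS]l11; apply: eq_bigr => a _; rewrite -mulr_sumr l21 mulr1.
  rewrite -(pair_big xpredT xpredT (fun a b => (l1 a * l2 b) *: (p1 a + p2 b))) /=.
  have -> : \sum_a \sum_b (l1 a * l2 b) *: (p1 a + p2 b) = \sum_a \sum_b (l1 a * l2 b) *: p1 a + \sum_a \sum_b (l1 a * l2 b) *: p2 b.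
    rewrite -big_split; apply: eq_bigr => a _; rewrite -big_split; apply: eq_bigr => b _.
    by rewrite scalerDr.
  congr (_ + _).
    apply: eq_bigr => a _; rewrite -scaler_suml -mulr_sumr l21 mulr1 //.
  rewrite exchange_big; apply: eq_bigr => b _.
  by rewrite -scaler_suml -mulr_suml l11 mul1r.
move=> [l [l0 [l1 ->]]].
exists (\sum_a l a *: p1 a.1), (\sum_a l a *: p2 a.2); split.
  exists (fun a => \sum_b l (a, b)); split; first by move=> a; apply: sumr_ge0.
  split; first by rewrite pair_big -l1; apply: eq_bigr => -[].
  rewrite [LHS](eq_bigr (fun u => l (u.1, u.2) *: p1 u.1)); last by case.
  rewrite -(pair_big xpredT xpredT (fun a b => l (a, b) *: p1 a)) /=.
  by apply: eq_bigr => a _; rewrite scaler_suml.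
split.
  exists (fun b => \sum_a l (a, b)); split; first by move=> b; apply: sumr_ge0.
  split; first by rewrite exchange_big pair_big -l1; apply: eq_bigr => -[].
  rewrite [LHS](eq_bigr (fun u => l (u.1, u.2) *: p2 u.2)); last by case.
  rewrite -(pair_big xpredT xpredT (fun a b => l (a, b) *: p2 b)) /=.
  by rewrite exchange_big; apply: eq_bigr => b _; rewrite scaler_suml.
by rewrite -big_split /=; apply: eq_bigr => u _; rewrite scalerDr.
Qed.

Lemma sum_unitV (F : unit -> vec) : \sum_u F u = F tt.
Proof. by rewrite (big_pred1 tt) // => -[]. Qed.
Lemma sum_unitR (F : unit -> R) : \sum_u F u = F tt.
Proof. by rewrite (big_pred1 tt) // => -[]. Qed.

Lemma msum_polytope (I : eqType) (s : seq I) (F : I -> pset) :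
  (forall j, exists (T : finType) (p : T -> vec), forall x, F j x <-> convT p x) ->
  exists (T : finType) (p : T -> vec), forall x, msum (map F s) x <-> convT p x.
Proof.
move=> HF; elim: s => [|j s [T [p Hp]]] /=.
  exists unit, (fun _ => 0) => x; split.
    by move->; exists (fun _ => 1); rewrite sum_unitV sum_unitR scaler0.
  by move=> [l [_ [_ ->]]]; rewrite sum_unitV scaler0.
have [T1 [p1 Hp1]] := HF j.
exists (T1 * T)%type, (fun u => p1 u.1 + p u.2) => x.
rewrite -convT_sum; split.
  by move=> [y1 [y2 [F1 [M2 ->]]]]; exists y1, y2; split; [exact/Hp1|split; [exact/Hp|]].
by move=> [y1 [y2 [F1 [M2 ->]]]]; exists y1, y2; split; [exact/Hp1|split; [exact/Hp|]].
Qed.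

End Msum.
Section Util.
Variable R : realType.

Lemma exists_eps (T : finType) (P : pred T) (f : T -> R) :
  (forall t, P t -> 0 < f t) -> exists2 eps : R, 0 < eps & forall t, P t -> eps <= f t.
Proof.
move=> Hf; exists (\big[Num.min/1]_(t | P t) f t).
  by apply: (big_ind (fun x => 0 < x)) => // x y x0 y0; rewrite lt_min x0 y0.
by move=> t Pt; rewrite (bigD1 t) //= ge_min lexx.
Qed.

Lemma small_step (T : finType) (P : pred T) (a b : T -> R) :
  (forall t, P t -> 0 < a t) ->
  exists2 s : R, 0 < s & forall t, P t -> 0 < a t + s * b t.
Proof.
move=> Ha.
have [s s0 Hs] := exists_eps (f := fun t => a t / (1 + `|b t|)) (fun t Pt =>
  divr_gt0 (Ha t Pt) (ltr_pwDl ltr01 (normr_ge0 _))).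
exists s => // t Pt.
have := Hs t Pt; set n := `|b t|; have n0 : 0 <= n by exact: normr_ge0.
have a0 := Ha t Pt.
have h1 : - (s * n) <= s * b t.
  by rewrite -mulrN ler_wpM2l ?(ltW s0) // lerNl /n -normrN ler_norm.
move=> H; have H2 : s * n <= a t / (1 + n) * n by rewrite ler_wpM2r.
have H3 : a t / (1 + n) * n < a t.
  rewrite mulrAC ltr_pdivrMr ?ltr_pwDl ?ltr01 //.
  by rewrite mulrDr mulr1 ltrDr.
have H4 : s * n < a t := le_lt_trans H2 H3.
apply: lt_le_trans (lerD (lexx (a t)) h1); by rewrite subr_gt0.
Qed.

Variable d : nat.
Local Notation vec := 'rV[R]_d.

Lemma ball_pairing (x y k : vec) eps : ball x eps y ->
  `|pairing y k - pairing x k| <= eps * \sum_q `|k 0 q|.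
Proof.
move=> B; rewrite -pairingBl /pairing mulr_sumr.
apply: le_trans (ler_norm_sum _ _ _) _; apply: ler_sum => q _.
by rewrite normrM ler_wpM2r // !mxE; apply: ltW; apply: B.
Qed.

Lemma conv_ge (T : finType) (l : T -> R) (f : T -> R) c :
  (forall t, 0 <= l t) -> \sum_t l t = 1 -> (forall t, c <= f t) -> c <= \sum_t l t * f t.
Proof.
move=> l0 l1 Hf; rewrite -[c]mul1r -l1 mulr_suml; apply: ler_sum => t _.
by rewrite ler_wpM2l.
Qed.

Lemma conv_gt (T : finType) (l : T -> R) (f : T -> R) c :
  (forall t, 0 <= l t) -> \sum_t l t = 1 -> (forall t, c < f t) -> c < \sum_t l t * f t.
Proof.
move=> l0 l1 Hf.
have [t lt] : exists t, 0 < l t.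
  apply: contrapT => H; move: l1; rewrite big1 => [/eqP|t _]; first by rewrite eq_sym oner_eq0.
  by apply/eqP; rewrite eq_le l0 andbT leNgt; apply/negP => Ht; apply: H; exists t.
rewrite -[c]mul1r -l1 mulr_suml -subr_gt0 -sumrB (bigD1 t) //=.
apply: ltr_wpDr; first by apply: sumr_ge0 => u _; rewrite -mulrBr mulr_ge0 // subr_ge0 ltW.
by rewrite -mulrBr mulr_gt0 // subr_gt0 Hf.
Qed.

End Util.
Section Edef.
Variables (R : realType) (d : nat) (e : seq 'rV[R]_d).
Definition E (k : 'I_(size e)) := nth 0 e k.
Lemma Ee k : E k \in e.
Proof. exact: mem_nth. Qed.
Lemma eE k : k \in e -> exists kk, E kk = k.
Proof. by case/(nthP 0) => n ns <-; exists (Ordinal ns). Qed.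

End Edef.
Section Aff.
Variables (R : realType) (d : nat).
Local Notation vec := 'rV[R]_d.

Lemma aff2 (A : pset R d) x y a : A x -> A y -> aff A (a *: x + (1 - a) *: y).
Proof.
move=> Ax Ay; exists 2, (fun i => if i == ord0 then x else y), (fun i => if i == ord0 then a else 1 - a).
split; first by move=> i; case: ifP.
by rewrite !big_ord_recl !big_ord0 /= !addr0 addrC subrK.
Qed.

Lemma aff_pairing (A : pset R d) k c y : (forall x, A x -> pairing x k = c) -> aff A y -> pairing y k = c.
Proof.
move=> H [n [p [l [Ap [l1 ->]]]]]; rewrite pairing_suml.
under eq_bigr do rewrite pairingZl H //.
by rewrite -mulr_suml l1 mul1r.
Qed.

Lemma small_vec (u : vec) eps : 0 < eps -> exists2 t : R, 0 < t & forall q, t * `|u 0 q| < eps.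
Proof.
move=> e0; pose S := \sum_q `|u 0 q|.
have S0 : 0 <= S by apply: sumr_ge0.
have S1 : 0 < 1 + S by lra.
exists (eps / (1 + S)); first by apply: divr_gt0.
move=> q; have : `|u 0 q| <= S by rewrite /S (bigD1 q) //= lerDl sumr_ge0.
move=> H; rewrite mulrAC ltr_pdivrMr //; nra.
Qed.

Lemma implicit_eq (A : pset R d) w k alpha : relint A w ->
  (forall x, A x -> alpha <= pairing x k) -> pairing w k = alpha ->
  forall x, A x -> pairing x k = alpha.
Proof.
move=> [Aw [eps e0 Heps]] Hge Hw x Ax.
have [t t0 Ht] := small_vec (w - x) e0.
have Ay : A ((1 + t) *: w + (1 - (1 + t)) *: x).
  apply: Heps; first exact: aff2.
  move=> q; rewrite !mxE.
  have -> : (1 + t) * w 0 q + (1 - (1 + t)) * x 0 q - w 0 q = t * (w 0 q - x 0 q) by ring.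
  by have := Ht q; rewrite !mxE normrM gtr0_norm.
have := Hge _ Ay; rewrite pairingDl !pairingZl Hw => H.
have := Hge _ Ax => H2.
apply/eqP; rewrite eq_le H2 andbT; nra.
Qed.

End Aff.

Section Rel.
Variables (R : realType) (d : nat) (e : seq 'rV[R]_d).
Local Notation vec := 'rV[R]_d.
Local Notation E := (@E R d e).
Local Notation Ee := (@Ee R d e).
Local Notation eE := (@eE R d e).
Variables (A : pset R d) (c : vec -> R) (w : vec).
Hypothesis HA : forall x, A x <-> forall k, k \in e -> - c k <= pairing x k.
Hypothesis Aw : A w.

Definition tight (k : 'I_(size e)) := pairing w (E k) == - c (E k).

Definition PR (P : pred 'I_(size e)) := exists lam : 'I_(size e) -> R,
  [/\ forall k, P k -> 0 < lam k, forall k, ~~ P k -> lam k = 0 & \sum_k lam k *: E k = 0].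

Lemma slack_pos k : ~~ tight k -> 0 < pairing w (E k) + c (E k).
Proof.
move=> ntk; have := (HA w).1 Aw _ (Ee k); rewrite -subr_ge0 opprK => H.
by rewrite lt_def H andbT; apply: contra ntk; rewrite /tight addr_eq0.
Qed.

Lemma nbhd : exists2 eps : R, 0 < eps & forall y, ball w eps y ->
  forall k, ~~ tight k -> - c (E k) < pairing y (E k).
Proof.
have [eps e0 He] := exists_eps (P := fun k => ~~ tight k)
  (f := fun k => (pairing w (E k) + c (E k)) / (1 + \sum_q `|E k 0 q|))
  (fun k ntk => divr_gt0 (slack_pos ntk) (ltr_pwDl ltr01 (sumr_ge0 _ (fun q _ => normr_ge0 _)))).
exists eps => // y By k ntk.
have H1 := ball_pairing (E k) By.
have H2 := He k ntk; set S := \sum_q `|E k 0 q| in H1 H2.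
have S0 : 0 <= S by apply: sumr_ge0.
have sl := slack_pos ntk.
have H3 : eps * S < pairing w (E k) + c (E k).
  apply: le_lt_trans (_ : (pairing w (E k) + c (E k)) / (1 + S) * S < _).
    by rewrite ler_wpM2r.
  rewrite mulrAC ltr_pdivrMr ?ltr_pwDl // mulrDr mulr1; by apply: ltr_pwDl.
move: H1; rewrite ler_norml => /andP [H4 _]; nra.
Qed.

Lemma PR_eqs : PR tight -> forall x, A x -> forall k, tight k -> pairing x (E k) = - c (E k).
Proof.
move=> [lam [lpos lzero lsum]] x Ax.
have Hge : forall k, 0 <= lam k * (pairing x (E k) + c (E k)).
  move=> k; case tk : (tight k); last by rewrite lzero ?tk // mul0r.
  apply: mulr_ge0; first exact: ltW (lpos k tk).
  have := (HA x).1 Ax _ (Ee k); lra.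
have Hsum : \sum_k lam k * (pairing x (E k) + c (E k)) = 0.
  under eq_bigr do rewrite mulrDr.
  rewrite big_split /=.
  have -> : \sum_k lam k * pairing x (E k) = 0.
    transitivity (pairing x (\sum_k lam k *: E k)); last by rewrite lsum pairing0r.
    by rewrite pairing_sumr; apply: eq_bigr => k _; rewrite pairingZr.
  have -> : \sum_k lam k * c (E k) = - \sum_k lam k * pairing w (E k).
    rewrite -sumrN; apply: eq_bigr => k _; case tk : (tight k).
      by rewrite (eqP tk) mulrN opprK.
    by rewrite lzero ?tk // !mul0r oppr0.
  have -> : \sum_k lam k * pairing w (E k) = 0.
    transitivity (pairing w (\sum_k lam k *: E k)); last by rewrite lsum pairing0r.
    by rewrite pairing_sumr; apply: eq_bigr => k _; rewrite pairingZr.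
  by rewrite oppr0 addr0.
move=> k tk; have := psumr_eq0P (P := xpredT) (fun k _ => Hge k) Hsum (i := k) isT.
move/eqP; rewrite mulf_eq0 => /orP [/eqP H|/eqP H].
  by have := lpos k tk; rewrite H ltxx.
by apply/eqP; rewrite -subr_eq0 opprK H.
Qed.

Lemma R1 : PR tight -> relint A w.
Proof.
move=> Hpr; split => //.
have [eps e0 He] := nbhd; exists eps => // y Ay By.
apply/HA => k ke; have [kk <-] := eE ke.
case tk : (tight kk).
  by rewrite (aff_pairing (c := - c (E kk)) _ Ay) // => x Ax; apply: PR_eqs.
by apply: ltW; apply: He => //; rewrite tk.
Qed.

Lemma cone_to_PR (P : pred 'I_(size e)) :
  (forall kk, P kk -> exists mu : 'I_(size e) -> R, (forall k, 0 <= mu k) /\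
      - E kk = \sum_k mu k *: (if P k then E k else 0)) -> PR P.
Proof.
move=> H.
have H' : forall kk, exists mu : 'I_(size e) -> R, P kk -> (forall k, 0 <= mu k) /\
    - E kk = \sum_k mu k *: (if P k then E k else 0).
  move=> kk; case: (boolP (P kk)) => [Pk|_]; last by exists (fun _ => 0).
  by have [mu Hmu] := H kk Pk; exists mu.
have [M HM] := choice H'.
exists (fun k => if P k then 1 + \sum_(kk | P kk) M kk k else 0); split.
- move=> k Pk; rewrite Pk.
  have : 0 <= \sum_(kk | P kk) M kk k.
    by apply: sumr_ge0 => kk Pkk; have [H0 _] := HM kk Pkk; exact: H0.
  lra.
- by move=> k /negPf ->.
- transitivity (\sum_k ((if P k then E k else 0) +
     \sum_(kk | P kk) M kk k *: (if P k then E k else 0))).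
    apply: eq_bigr => k _; case: (P k); first by rewrite scalerDl scale1r scaler_suml.
    by rewrite scale0r big1 ?addr0 // => kk _; rewrite scaler0.
  rewrite big_split /= exchange_big /=.
  have -> : \sum_(kk | P kk) \sum_k M kk k *: (if P k then E k else 0) = \sum_(kk | P kk) - E kk.
    by apply: eq_bigr => kk Pkk; have [_ ->] := HM kk Pkk.
  by rewrite sumrN -big_mkcond /= subrr.
Qed.

Lemma R2 : relint A w -> PR tight.
Proof.
move=> RA; apply: cone_to_PR => kk tkk.
case: (farkas (fun k => if tight k then E k else 0) (- E kk)) => [[mu mu0 Emu]|[z [zpos zb]]].
  by exists mu.
exfalso.
have pz : 0 < pairing z (E kk) by move: zb; rewrite pairingNr oppr_lt0.
have [s s0 Hs] := small_step (P := fun k => ~~ tight k)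
  (a := fun k => pairing w (E k) + c (E k)) (pairing z \o E) (fun k ntk => slack_pos ntk).
have Ax : A (w + s *: z).
  apply/HA => k ke; have [k' <-] := eE ke; rewrite pairingDl pairingZl.
  case tk : (tight k').
    have := zpos k'; rewrite tk (eqP tk) => H; nra.
  have := Hs k' (negbT tk) => /= H; nra.
have := implicit_eq RA (k := E kk) (alpha := - c (E kk))
  (fun x Ax => (HA x).1 Ax _ (Ee kk)) (eqP tkk) Ax.
rewrite pairingDl pairingZl (eqP tkk) => H; nra.
Qed.

End Rel.
Section Main.
Variables (R : realType) (d : nat) (Delta : pset R d) (e : seq 'rV[R]_d)
  (r : nat) (D : 'I_r -> pset R d).
Hypothesis HR : reflexive_with_normals Delta e.
Hypothesis HN : nef_partition Delta e D.
Local Notation vec := 'rV[R]_d.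
Local Notation E := (@E R d e).
Local Notation Ee := (@Ee R d e).
Local Notation eE := (@eE R d e).

Definition ph j k : R := if `[< phi_eq (D j) k 1 >] then 1 else 0.

Lemma ph_phi j k : k \in e -> phi_eq (D j) k (ph j k).
Proof.
rewrite /ph; case: asboolP => // H ke.
have [_ _ H3] := HN; by case: (H3 j k ke).
Qed.

Lemma ph_ge0 j k : 0 <= ph j k.
Proof. by rewrite /ph; case: asboolP. Qed.
Lemma ph_le1 j k : ph j k <= 1.
Proof. by rewrite /ph; case: asboolP. Qed.
Lemma ph_cases j k : ph j k = 0 \/ ph j k = 1.
Proof. by rewrite /ph; case: asboolP; [right|left]. Qed.
Lemma ph1 j k : ph j k = 1 -> phi_eq (D j) k 1.
Proof. by rewrite /ph; case: asboolP => // _ /eqP; rewrite eq_sym oner_eq0. Qed.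
Lemma ph1' j k : k \in e -> ph j k != 0 -> phi_eq (D j) k 1.
Proof. move=> ke; case: (ph_cases j k) => [->|H]; first by rewrite eqxx. by move=> _; apply: ph1. Qed.
Lemma phi1_ph j k : phi_eq (D j) k 1 -> ph j k = 1.
Proof. by rewrite /ph; case: asboolP. Qed.

Lemma Qdelta x : Delta x <-> forall k, k \in e -> -1 <= pairing x k.
Proof. by have [_ _ H _ _] := HR. Qed.

Lemma Delta_msum x : Delta x <-> msum [seq D j | j <- enum 'I_r] x.
Proof. by have [_ H _] := HN. Qed.

Lemma D_poly j : exists (T : finType) (p : T -> vec), forall x, D j x <-> convT p x.
Proof.
have [H1 _ _] := HN; have [V [_ HV]] := H1 j.
by exists 'I_(size V), (fun t : 'I_(size V) => nth 0 V t) => x; exact: HV.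
Qed.

Lemma Delta_nonempty : exists x, Delta x.
Proof. by have [_ [[p [Hp _]] _] _ _ _] := HR; exists (p ord0). Qed.

Lemma phi_eq_ext (P Q : pset R d) k c : (forall x, P x <-> Q x) -> phi_eq P k c -> phi_eq Q k c.
Proof.
move=> PQ [H1 [x Px Ex]]; split; first by move=> y /PQ; apply: H1.
by exists x => //; apply/PQ.
Qed.

Lemma sum_enum (F : 'I_r -> R) : \sum_(j <- enum 'I_r) F j = \sum_j F j.
Proof. by rewrite big_enum; apply: eq_bigl => j; rewrite inE. Qed.
Lemma sum_enumV (F : 'I_r -> vec) : \sum_(j <- enum 'I_r) F j = \sum_j F j.
Proof. by rewrite big_enum; apply: eq_bigl => j; rewrite inE. Qed.

Lemma sum_ph k : k \in e -> \sum_j ph j k = 1.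
Proof.
move=> ke.
have H1 : phi_eq Delta k 1.
  split; first by move=> x /Qdelta H; exact: H.
  have [_ _ _ _ H5] := HR; have [_ [[p [Hp _]] _]] := H5 k ke.
  by have [P1 P2] := Hp ord0; exists (p ord0).
have H2 : phi_eq Delta k (\sum_(j <- enum 'I_r) ph j k).
  apply: (phi_eq_ext (P := msum [seq D j | j <- enum 'I_r])) => [x|].
    by rewrite Delta_msum.
  by apply: msum_phi => j _; apply: ph_phi.
by rewrite -sum_enum; apply: (phi_eq_uniq H2 H1).
Qed.

Definition cs (s : seq 'I_r) k := \sum_(j <- s) ph j k.
Definition Qs s x := forall k, k \in e -> - cs s k <= pairing x k.

Lemma A_sub_Q s x : msum (map D s) x -> Qs s x.
Proof.
move=> Ax k ke.
have [H _] := msum_phi (s := s) (F := D) (k := k) (c := fun j => ph j k) (fun j _ => ph_phi j ke).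
exact: H.
Qed.

Lemma Q_sub_A s x : Qs s x -> msum (map D s) x.
Proof.
move=> Qx; apply: contrapT => nA.
have [T [p Hp]] := msum_polytope s D_poly.
have [y Hy] : exists y, forall t, pairing x y < pairing (p t) y.
  by apply: separation => /Hp.
have Ay : forall a, msum (map D s) a -> pairing x y < pairing a y.
  move=> a /Hp [l [l0 [l1 ->]]]; rewrite pairing_suml.
  under eq_bigr do rewrite pairingZl; exact: conv_gt.
have [H1 _ _ _ _] := HR; have [V [_ HV]] := H1.
have [x0 Dx0] := Delta_nonempty.
have [t0 _] : exists t0 : 'I_(size V), True.
  have [l [_ [l1 _]]] := (HV x0).1 Dx0.
  case: (size V) l l1 => [|n] l l1; last by exists ord0.
  by move: l1; rewrite big_ord0 => /eqP; rewrite eq_sym oner_eq0.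
pose f := fun t : 'I_(size V) => pairing (nth 0 V t) y.
case: (arg_minP f (P := xpredT) (i0 := t0) isT) => tm _ Htm.
pose v := nth 0 V tm.
have Dv : Delta v.
  apply/HV; exists (fun t => if t == tm then 1 else 0); split; first by move=> t; case: eqP.
  split; first by rewrite (bigD1 tm) //= eqxx big1 ?addr0 // => t /negPf ->.
  rewrite (bigD1 tm) //= eqxx scale1r big1 ?addr0 // => t /negPf ->.
  by rewrite scale0r.
have vmin : forall u, Delta u -> pairing v y <= pairing u y.
  move=> u /HV [l [l0 [l1 ->]]]; rewrite pairing_suml.
  under eq_bigr do rewrite pairingZl; apply: conv_ge => // t; exact: Htm.
pose tight := fun k => pairing v (E k) == -1.
case: (farkas (fun k => if tight k then E k else 0) y) => [[lam lam0 Ey]|[z [zpos zy]]]; last first.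
  have Hpos : forall k, ~~ tight k -> 0 < pairing v (E k) + 1.
    move=> k ntk; rewrite -(opprK 1) subr_gt0 lt_def; apply/andP; split; first exact: ntk.
    exact: (Qdelta v).1 Dv (E k) (Ee k).
  have [s0 s0p Hs] := small_step (P := fun k => ~~ tight k) (pairing z \o E) Hpos.
  have Dvs : Delta (v + s0 *: z).
    apply/Qdelta => k ke; have [kk <-] := eE ke.
    rewrite pairingDl pairingZl.
    case tk : (tight kk).
      have := zpos kk; rewrite tk => zk; rewrite (eqP tk) lerDl mulr_ge0 //; exact: ltW.
    move: (Hs kk (negbT tk)) => /= H; apply: ltW; rewrite -subr_gt0 opprK addrAC; exact: H.
  have := vmin _ Dvs; rewrite pairingDl pairingZl lerDl pmulr_rge0 //.
  by rewrite leNgt zy.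
have [g [Hg Ev]] := msum_decomp (enum_uniq 'I_r) ((Delta_msum v).1 Dv).
have Htight : forall k j, tight k -> pairing (g j) (E k) = - ph j (E k).
  move=> k j tk.
  have Hge : forall j, 0 <= pairing (g j) (E k) + ph j (E k).
    move=> j'; have [Hl _] := ph_phi j' (Ee k); rewrite -lerBlDr sub0r.
    by apply: Hl; apply: Hg; rewrite mem_enum.
  have Hsum : \sum_j (pairing (g j) (E k) + ph j (E k)) = 0.
    rewrite big_split /= sum_ph ?Ee // -pairing_suml -sum_enumV -Ev.
    by rewrite (eqP tk) addNr.
  apply/eqP; rewrite -subr_eq0 opprK; apply/eqP.
  by apply: (psumr_eq0P (fun j _ => Hge j) Hsum).
have Aa := msum_sum (s := s) (F := D) (g := g) (fun j _ => Hg j (mem_enum _ j)).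
have := Ay _ Aa; apply/negP; rewrite -leNgt Ey !pairing_sumr; apply: ler_sum => k _.
rewrite !pairingZr ler_wpM2l //.
case tk : (tight k); last by rewrite !pairing0r.
rewrite pairing_suml; under eq_bigr do rewrite Htight //.
by rewrite sumrN; apply: Qx; exact: Ee.
Qed.


Lemma int_lt (x y : R) : x \is a Num.int -> y \is a Num.int -> x < y -> x + 1 <= y.
Proof.
move=> /intrP [m ->] /intrP [n ->]; rewrite ltr_int => H.
have -> : m%:~R + 1 = (m + 1)%:~R :> R by rewrite intrD.
by rewrite ler_int -ltzD1 ltrD2r.
Qed.

Lemma pairing_int (x k : vec) : lattice x -> lattice k -> pairing x k \is a Num.int.
Proof. by move=> lx lk; apply: rpred_sum => q _; apply: rpredM. Qed.

Lemma e_lattice k : k \in e -> lattice k.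
Proof. by move=> ke; have [_ _ _ _ H5] := HR; have [[H _] _] := H5 k ke. Qed.

Lemma msum1 (P : pset R d) x : msum [:: P] x <-> P x.
Proof.
split; first by move=> [p [q [Pp [-> ->]]]]; rewrite addr0.
by move=> Px; exists x, 0; rewrite addr0.
Qed.

Lemma D_Q j x : D j x <-> forall k, k \in e -> - ph j k <= pairing x k.
Proof.
split => [Dx k ke|H].
  by have := @A_sub_Q [:: j] x (proj2 (msum1 _ _) Dx) k ke; rewrite /cs big_seq1.
apply/(msum1 (D j)); apply: (@Q_sub_A [:: j]) => k ke; rewrite /cs big_seq1; exact: H.
Qed.

Lemma D0 j : D j 0.
Proof. by apply/D_Q => k ke; rewrite pairing0l oppr_le0; apply: ph_ge0. Qed.

Lemma sum_sub_le (J : {set 'I_r}) k : \sum_(j in J) ph j k <= \sum_j ph j k.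
Proof.
rewrite [X in _ <= X](bigID (fun j => j \in J)) /= lerDl.
by apply: sumr_ge0 => j _; apply: ph_ge0.
Qed.

Lemma ph_sum_other j j' k : k \in e -> j != j' -> ph j k = 1 -> ph j' k = 0.
Proof.
move=> ke jj' Hj; have := sum_ph ke; rewrite (bigD1 j) //= Hj => H.
have : ph j' k <= \sum_(i0 | i0 != j) ph i0 k.
  rewrite (bigD1 j') 1?eq_sym //= lerDl; by apply: sumr_ge0 => *; apply: ph_ge0.
have := ph_ge0 j' k; lra.
Qed.

Lemma Dstar_Q x : nabla_star D x -> forall k, k \in e -> -1 <= pairing x k.
Proof.
move=> [n [p [l [Hp [l0 [l1 ->]]]]]] k ke.
rewrite pairing_suml; under eq_bigr do rewrite pairingZl.
apply: conv_ge => // t; have [j Dj] := Hp t.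
have := (D_Q j (p t)).1 Dj k ke; have := ph_le1 j k; lra.
Qed.

Lemma Delta_bounded q : exists M : R, forall x, Delta x -> `|x 0 q| <= M.
Proof.
have [H1 _ _ _ _] := HR; have [V [_ HV]] := H1.
exists (\sum_(t < size V) `|nth 0 V t 0 q|) => x /HV [l [l0 [l1 ->]]].
rewrite summxE; apply: le_trans (ler_norm_sum _ _ _) _; apply: ler_sum => t _.
rewrite mxE normrM ger0_norm // ler_piMl //.
by rewrite -l1 (bigD1 t) //= lerDl sumr_ge0.
Qed.

Section Thm.
Variables (J : {set 'I_r}) (i : 'I_r) (w : vec).
Hypothesis iJ : i \in J.
Hypothesis lw : lattice w.
Hypothesis w0 : w != 0.

Definition sA := i :: enum J.
Definition cA k := cs sA k.
Definition AA := msum (map D sA).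
Lemma HA x : AA x <-> forall k, k \in e -> - cA k <= pairing x k.
Proof. rewrite /AA; split => [H k ke|H]; [exact: (A_sub_Q H)|apply: Q_sub_A => k ke; exact: H k ke]. Qed.

Definition sig k := \sum_(j in J) ph j k.
Lemma cAE k : cA k = ph i k + sig k.
Proof. by rewrite /cA /cs /sA big_cons big_enum. Qed.

Lemma sig_facts k : k \in e -> [/\ 0 <= sig k, sig k <= 1 & ph i k <= sig k].
Proof.
move=> ke; split.
- by apply: sumr_ge0 => j _; apply: ph_ge0.
- by rewrite -(sum_ph ke); apply: sum_sub_le.
- by rewrite /sig (bigD1 i) //= lerDl; apply: sumr_ge0 => j _; apply: ph_ge0.
Qed.

Lemma A0 : AA 0.
Proof.
apply/HA => k ke; rewrite pairing0l oppr_le0 cAE.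
by have [H1 _ _] := sig_facts ke; have := ph_ge0 i k; lra.
Qed.

Lemma relA_Di : relint AA w -> D i w.
Proof.
move=> RA; apply/D_Q => k ke; apply: contrapT => /negP; rewrite -ltNge => Hlt.
have [s0 s1 s2] := sig_facts ke.
have Aw := RA.1.
have Hge := (HA w).1 Aw k ke; rewrite cAE in Hge.
have pint := pairing_int lw (e_lattice ke).
have phint : - ph i k \is a Num.int by case: (ph_cases i k) => ->; rewrite ?oppr0 ?rpredN ?rpred0 ?rpred1.
have H1 := int_lt pint phint Hlt.
have [Heq Hc] : pairing w k = - cA k /\ 1 <= cA k.
  by rewrite cAE; case: (ph_cases i k) => Hp; rewrite Hp in H1 Hge s2 *; split; lra.
have := implicit_eq RA (k := k) (alpha := - cA k) (fun x Ax => (HA x).1 Ax k ke) Heq A0.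
by rewrite pairing0l => /eqP; rewrite eq_sym oppr_eq0 => /eqP H; rewrite H ler10 in Hc.
Qed.

Lemma Di_boundary : D i w -> Dzero D i w.
Proof.
move=> Dw; split => //; split; last by [].
split.
  exists 1, (fun _ => w), (fun _ => 1); split; first by move=> _; exists i.
  by split => //; rewrite !big_ord1 scale1r.
move=> [eps e0 Heps].
have [t t0 Ht] := small_vec w e0.
have Hs : nabla_star D ((1 + t) *: w).
  apply: Heps => q; rewrite mxE; have := Ht q.
  have -> : (1 + t) * w 0 q - w 0 q = t * w 0 q by ring.
  by rewrite normrM gtr0_norm.
have Hk : forall k, k \in e -> 0 <= pairing w k.
  move=> k ke; have := Dstar_Q Hs ke; rewrite pairingZl => H.
  have : -1 < pairing w k.
    rewrite ltNge; apply/negP => H2.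
    have : (1 + t) * pairing w k <= (1 + t) * -1 by rewrite ler_wpM2l //; lra.
    lra.
  have m1 : (-1 : R) \is a Num.int by rewrite rpredN rpred1.
  move/(int_lt m1 (pairing_int lw (e_lattice ke))); lra.
apply/negP: w0; rewrite negbK; apply/eqP/matrixP => a q; rewrite (ord1 a) mxE.
have [M HM] := Delta_bounded q.
have Hs' : forall s, 0 <= s -> s * `|w 0 q| <= M.
  move=> s s0; have := HM (s *: w); rewrite mxE normrM ger0_norm //; apply.
  apply/Qdelta => k ke; rewrite pairingZl; have := Hk k ke; nra.
apply/eqP; apply: contraT => wq.
have wq0 : 0 < `|w 0 q| by rewrite normr_gt0.
have M0 : 0 <= M by have := Hs' 0 (lexx 0); rewrite mul0r.
have s0 : 0 <= (M + 1) / `|w 0 q| by apply: divr_ge0; lra.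
have := Hs' _ s0; rewrite mulrAC -mulrA mulfV ?mulr1 ?gt_eqF //; lra.
Qed.


Local Notation tA := (@tight R d e cA w).
Local Notation PR' := (@PR R d e).

Lemma sig_split k : k \in e -> sig k + \sum_(j | j \notin J) ph j k = 1.
Proof. by move=> ke; rewrite -(sum_ph ke) [RHS](bigID (fun j => j \in J)). Qed.

Section WithD.
Hypothesis Dw : D i w.

Lemma tA_spec k : tA k -> pairing w (E k) = 0 /\ exists j, j \notin J /\ ph j (E k) = 1.
Proof.
move=> /eqP tk.
have [s0 s1 s2] := sig_facts (Ee k).
have Hge := (D_Q i w).1 Dw (E k) (Ee k).
rewrite cAE in tk.
have sig0 : sig (E k) = 0 by lra.
split; first by have := ph_ge0 i (E k); lra.
have Hs := sig_split (Ee k); rewrite sig0 add0r in Hs.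
apply: contrapT => H.
move: Hs; rewrite big1 => [/eqP|j jJ]; first by rewrite eq_sym oner_eq0.
case: (ph_cases j (E k)) => // Hj; exfalso; apply: H; by exists j.
Qed.

Lemma tA_of k j : pairing w (E k) = 0 -> j \notin J -> ph j (E k) = 1 -> tA k.
Proof.
move=> pk jJ Hj.
have [s0 s1 s2] := sig_facts (Ee k).
have Hs := sig_split (Ee k).
have : ph j (E k) <= \sum_(j | j \notin J) ph j (E k).
  by rewrite (bigD1 j) //= lerDl; apply: sumr_ge0 => *; apply: ph_ge0.
move=> H; have := ph_ge0 i (E k); move=> H2; apply/eqP; rewrite cAE pk; lra.
Qed.

Lemma nabla_ge0 j y : j \notin J -> nabla e D j y -> 0 <= pairing w y.
Proof.
move=> jJ [l0 [l [_ [lp [_ [Hl ->]]]]]].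
rewrite pairing_sumr; apply: sumr_ge0 => k _; rewrite pairingZr.
case: (eqVneq (l k) 0) => [->|lk]; first by rewrite mul0r.
apply: mulr_ge0 => //.
have Hj := phi1_ph (Hl k lk).
have ji : j != i by apply: contraNneq jJ => ->.
have := ph_sum_other (Ee k) ji Hj => Hi.
by have := (D_Q i w).1 Dw (E k) (Ee k); rewrite Hi oppr0.
Qed.

Lemma nabla0 j : nabla e D j 0.
Proof.
exists 1, (fun _ => 0); split => //; split => //; split; first by rewrite big1 ?addr0.
by split => [k|]; [rewrite eqxx|rewrite big1 // => k _; rewrite scale0r].
Qed.

Definition Cj j := minface (nabla e D j) w.
Definition BB := msum [seq Cj j | j <- enum (~: J)].

Lemma Cj_sub j y : j \notin J -> Cj j y -> exists beta : 'I_(size e) -> R,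
  [/\ forall k, 0 <= beta k, forall k, ~~ tA k -> beta k = 0 & y = \sum_k beta k *: E k].
Proof.
move=> jJ [Ny Hmin].
have p0 : pairing w y = 0.
  apply/eqP; rewrite eq_le (nabla_ge0 jJ Ny) andbT.
  by have := Hmin 0 (nabla0 j); rewrite pairing0r.
move: Ny p0 => [l0 [l [_ [lp [_ [Hl Ey]]]]]] p0.
exists l; split; [exact: lp| |exact: Ey].
move=> k ntk; apply: contraNeq ntk => lk.
have Hj := phi1_ph (Hl k lk).
have ji : j != i by apply: contraNneq jJ => ->.
have Hi := ph_sum_other (Ee k) ji Hj.
have Hge : forall k, 0 <= l k * pairing w (E k).
  move=> k'; case: (eqVneq (l k') 0) => [->|lk']; first by rewrite mul0r.
  apply: mulr_ge0 => //; have Hj' := phi1_ph (Hl k' lk').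
  have := ph_sum_other (Ee k') ji Hj' => Hi'.
  by have := (D_Q i w).1 Dw (E k') (Ee k'); rewrite Hi' oppr0.
have : \sum_k l k * pairing w (E k) = 0.
  transitivity (pairing w y); last exact: p0.
  by rewrite Ey pairing_sumr; apply: eq_bigr => k' _; rewrite pairingZr.
move/(psumr_eq0P (P := xpredT) (fun k _ => Hge k)) => /(_ k isT) /eqP.
rewrite mulf_eq0 (negbTE lk) /= => /eqP pk.
exact: (tA_of pk jJ Hj).
Qed.

Lemma BB_sub y : BB y -> exists beta : 'I_(size e) -> R,
  [/\ forall k, 0 <= beta k, forall k, ~~ tA k -> beta k = 0 & y = \sum_k beta k *: E k].
Proof.
move=> By.
pose Q := fun y : vec => exists beta : 'I_(size e) -> R,
  [/\ forall k, 0 <= beta k, forall k, ~~ tA k -> beta k = 0 & y = \sum_k beta k *: E k].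
suff : Q y by [].
apply: (msum_ind (Q := Q) (F := Cj) (s := enum (~: J))) By.
- by exists (fun _ => 0); split => //; rewrite big1 // => k _; rewrite scale0r.
- move=> x1 x2 [b1 [b10 b1z ->]] [b2 [b20 b2z ->]]; exists (fun k => b1 k + b2 k); split.
  + by move=> k; apply: addr_ge0.
  + by move=> k ntk; rewrite b1z // b2z // addr0.
  + by rewrite -big_split; apply: eq_bigr => k _; rewrite scalerDl.
- move=> j x; rewrite mem_enum inE => jJ; exact: Cj_sub.
Qed.

Lemma Cj_mem j (beta : 'I_(size e) -> R) : j \notin J -> (forall k, 0 <= beta k) ->
  (forall k, beta k != 0 -> pairing w (E k) = 0 /\ ph j (E k) = 1) ->
  \sum_k beta k <= 1 -> Cj j (\sum_k beta k *: E k).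
Proof.
move=> jJ b0 Hb b1; split.
  exists (1 - \sum_k beta k), beta; split; first by rewrite subr_ge0.
  split => //; split; first by rewrite subrK.
  by split => // k bk; apply: ph1; have [_ ->] := Hb k bk.
move=> z Nz; apply: le_trans (nabla_ge0 jJ Nz); rewrite pairing_sumr.
rewrite big1 // => k _; rewrite pairingZr.
by case: (eqVneq (beta k) 0) => [->|bk]; [rewrite mul0r|have [-> _] := Hb k bk; rewrite mulr0].
Qed.

Definition jsel k := odflt i [pick j | (j \notin J) && (ph j (E k) == 1)].

Lemma jsel_spec k : tA k -> jsel k \notin J /\ ph (jsel k) (E k) = 1.
Proof.
move=> tk; have [_ [j [jJ Hj]]] := tA_spec tk.
rewrite /jsel; case: pickP => [j' /= /andP [j'J /eqP Hj']|H]; first by split.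
by move: (H j); rewrite /= jJ Hj eqxx.
Qed.

Lemma BB_of_beta (beta : 'I_(size e) -> R) : (forall k, 0 <= beta k) ->
  (forall k, ~~ tA k -> beta k = 0) -> \sum_k beta k <= 1 -> BB (\sum_k beta k *: E k).
Proof.
move=> b0 bz b1.
pose g j := \sum_k (if jsel k == j then beta k else 0) *: E k.
have Cg : forall j, j \in enum (~: J) -> Cj j (g j).
  move=> j; rewrite mem_enum inE => jJ; apply: Cj_mem => //.
  - by move=> k; case: ifP.
  - move=> k /=; case: (eqVneq (jsel k) j) => [<- bk|_]; last by rewrite eqxx.
    have tk : tA k by apply: contraNT bk => /bz ->.
    by have [_ [j' _]] := tA_spec tk; split; [have [-> _] := tA_spec tk|have [_ ->] := jsel_spec tk].
  - apply: le_trans b1; apply: ler_sum => k _; case: ifP => // _.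
have := msum_sum (s := enum (~: J)) (F := Cj) Cg.
congr BB; rewrite big_enum /g exchange_big; apply: eq_bigr => k _ /=.
case tk : (tA k).
  have [jJ _] := jsel_spec tk.
  rewrite (bigD1 (jsel k)) ?inE //= eqxx big1 ?addr0 // => j /andP [_ /negPf].
  by rewrite eq_sym => ->; rewrite scale0r.
rewrite bz ?tk // scale0r big1 // => j _; by case: ifP => _; rewrite scale0r.
Qed.

Lemma BB0 : BB 0.
Proof.
have -> : (0 : vec) = \sum_k (fun _ => 0 : R) k *: E k by rewrite big1 // => k _; rewrite scale0r.
by apply: BB_of_beta => //; rewrite big1.
Qed.

Lemma relB_PR : relint BB 0 -> PR' tA.
Proof.
move=> [B0 [eps e0 Heps]]; apply: (@cone_to_PR R d e) => kk tkk.
have BE : BB (E kk).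
  have -> : E kk = \sum_k (if k == kk then 1 else 0) *: E k.
    rewrite (bigD1 kk) //= eqxx scale1r big1 ?addr0 // => k /negPf ->.
    by rewrite scale0r.
  apply: BB_of_beta => [k|k|]; first by case: eqP.
    by case: eqP => // ->; rewrite tkk.
  by rewrite (bigD1 kk) //= eqxx big1 ?addr0 // => k /negPf ->.
have [t t0 Ht] := small_vec (E kk) e0.
have Bt : BB (- t *: E kk).
  have := aff2 (- t) BE B0; rewrite scaler0 addr0 => Haff.
  apply: Heps => // q; rewrite !mxE subr0 normrM normrN (gtr0_norm t0); exact: Ht.
have [beta [b0 bz Eb]] := BB_sub Bt.
exists (fun k => beta k / t); split; first by move=> k; apply: divr_ge0 => //; apply: ltW.
have -> : - E kk = t^-1 *: (- t *: E kk) by rewrite scalerA mulrN mulVf ?gt_eqF // scaleN1r.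
rewrite Eb scaler_sumr; apply: eq_bigr => k _; rewrite scalerA mulrC.
case tk : (tA k) => /=; first by [].
by rewrite bz ?tk // ?(mul0r, mulr0, scale0r, scaler0).
Qed.

Definition MM : 'M[R]_(size e, d) := \matrix_(k, q) (if tA k then E k 0 q else 0).

Lemma rowMM k : row k MM = if tA k then E k else 0.
Proof. by apply/rowP => q; rewrite !mxE; case: (tA k); rewrite ?mxE. Qed.

Lemma mulMM (a : 'rV[R]_(size e)) : a *m MM = \sum_k a 0 k *: (if tA k then E k else 0).
Proof. by rewrite mulmx_sum_row; apply: eq_bigr => k _; rewrite rowMM. Qed.

Lemma BB_subM y : BB y -> (y <= MM)%MS.
Proof.
move=> /BB_sub [beta [b0 bz ->]].
have -> : \sum_k beta k *: E k = (\row_k beta k) *m MM.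
  rewrite mulMM; apply: eq_bigr => k _; rewrite mxE.
  by case tk : (tA k); rewrite // bz ?tk // !scale0r.
exact: submxMl.
Qed.

Lemma affB_subM y : aff BB y -> (y <= MM)%MS.
Proof.
move=> [n [p [l [Bp [_ ->]]]]]; apply: summx_sub => j _.
by apply: scalemx_sub; apply: BB_subM.
Qed.


Lemma B_nbhd : PR' tA -> exists2 eps : R, 0 < eps & forall y, (y <= MM)%MS -> ball 0 eps y -> BB y.
Proof.
move=> [lam [lpos lz lsum]].
pose P := pinvmx MM.
pose C := 1 + \sum_k \sum_q `|P q k|.
have C1 : 1 <= C by rewrite /C lerDl; do 2!apply: sumr_ge0 => * //.
pose L := 1 + \sum_k lam k.
have lam0 : forall k, 0 <= lam k.
  by move=> k; case tk : (tA k); [apply: ltW; apply: lpos; rewrite tk|rewrite lz ?tk].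
have L1 : 1 <= L by rewrite /L lerDl; apply: sumr_ge0.
pose tau := (2 * L)^-1.
have tau0 : 0 < tau by rewrite invr_gt0; lra.
have [m m0 Hm] := exists_eps lpos.
have eps0 : 0 < tau * m / C by apply: divr_gt0; [apply: mulr_gt0|lra].
exists (tau * m / C) => // y yM By.
pose a := y *m P.
have Ey : y = a *m MM by rewrite mulmxKpV.
have Ha : forall k, `|a 0 k| <= tau * m.
  move=> k; rewrite mxE; apply: le_trans (ler_norm_sum _ _ _) _.
  apply: le_trans (_ : \sum_q (tau * m / C) * `|P q k| <= _).
    apply: ler_sum => q _; rewrite normrM ler_wpM2r //; apply: ltW.
    by have := By q; rewrite !mxE subr0.
  rewrite -mulr_sumr; apply: le_trans (_ : tau * m / C * C <= _).
    rewrite ler_wpM2l ?ltW //.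
    have H0 : \sum_q `|P q k| <= \sum_k' \sum_q `|P q k'|.
      by rewrite (bigD1 k) //= lerDl; apply: sumr_ge0 => k' _; apply: sumr_ge0.
    rewrite /C; lra.
  by rewrite -mulrA mulVf ?mulr1 // gt_eqF //; lra.
pose beta k := if tA k then a 0 k + tau * lam k else 0.
have -> : y = \sum_k beta k *: E k.
  rewrite Ey mulMM.
  transitivity (\sum_k (a 0 k *: (if tA k then E k else 0) + tau *: (lam k *: E k))).
    by rewrite big_split /= -scaler_sumr lsum scaler0 addr0.
  apply: eq_bigr => k _; rewrite /beta; case tk : (tA k).
    by rewrite scalerDl scalerA.
  by rewrite lz ?tk // scale0r !scaler0 addr0.
apply: BB_of_beta.
- move=> k; rewrite /beta; case tk : (tA k) => //.
  have := Ha k; have := Hm k tk; rewrite ler_norml => H1 /andP [H2 _]; nra.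
- by move=> k; rewrite /beta; case: (tA k).
- apply: le_trans (_ : \sum_k 2 * tau * lam k <= _).
    apply: ler_sum => k _; rewrite /beta; case tk : (tA k).
      have := Ha k; have := Hm k tk; rewrite ler_norml => H1 /andP [_ H2]; nra.
    by rewrite mulr_ge0 // mulr_ge0 // ltW.
  rewrite -mulr_sumr; have -> : \sum_k lam k = L - 1 by rewrite /L addrC addKr.
  rewrite /tau; have L0 : 0 < L by lra.
  have -> : 2 * (2 * L)^-1 * (L - 1) = (L - 1) / L.
    by field; rewrite gt_eqF.
  rewrite ler_pdivrMr //; lra.
Qed.

Lemma PR_relB : PR' tA -> relint BB 0.
Proof.
move=> Hpr; split; first exact: BB0.
have [eps e0 He] := B_nbhd Hpr; exists eps => // y Ay By.
by apply: He => //; apply: affB_subM.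
Qed.

End WithD.

Lemma small_mx m n (K : 'M[R]_(m, n)) eps : 0 < eps ->
  exists2 t : R, 0 < t & forall l q, t * `|K l q| < eps.
Proof.
move=> e0; pose S := \sum_l \sum_q `|K l q|.
have S0 : 0 <= S by apply: sumr_ge0 => *; apply: sumr_ge0.
have S1 : 0 < 1 + S by lra.
exists (eps / (1 + S)); first by apply: divr_gt0.
move=> l q; have : `|K l q| <= S.
  rewrite /S (bigD1 l) //= (bigD1 q) //= -addrA lerDl.
  by apply: addr_ge0; apply: sumr_ge0 => *; [|apply: sumr_ge0].
move=> H; rewrite mulrAC ltr_pdivrMr //; nra.
Qed.

Lemma diffmx_ext n (w1 : vec) (F : 'I_n -> vec) :
  Defs.diffmx (ext w1 F) = \matrix_(i, k) (F i 0 k - w1 0 k).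
Proof. by apply/matrixP => a k; rewrite !mxE extS ext0. Qed.

Lemma dimA : AA w -> PR' tA -> affdim AA (\rank (kermx MM^T)).
Proof.
move=> Aw Hpr.
set K := row_base (kermx MM^T).
have KK : (K <= kermx MM^T)%MS by rewrite /K eq_row_base.
have rK : \rank K = \rank (kermx MM^T) by rewrite /K eq_row_base.
clearbody K.
have HK : forall l k, tA k -> pairing (row l K) (E k) = 0.
  move=> l k tk; move: KK.
  rewrite sub_kermx => /eqP /matrixP /(_ l k); rewrite !mxE => H.
  rewrite -[RHS]H /pairing; apply: eq_bigr => q _; rewrite !mxE tk.
  by [].
have [eps e0 He] := nbhd HA Aw.
have [t t0 Ht] := small_mx K e0.
split.
  exists (ext w (fun l => w + t *: row l K)); split.
    move=> u; case: (unliftP ord0 u) => [l ->|->]; rewrite ?extS ?ext0 //.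
    apply/HA => k ke; have [kk <-] := eE ke.
    case tk : (tA kk).
      rewrite pairingDl pairingZl HK // mulr0 addr0; exact: (HA w).1 Aw _ (Ee kk).
    apply: ltW; apply: He; last by rewrite tk.
    move=> q; rewrite !mxE addrAC subrr add0r normrM (gtr0_norm t0); exact: Ht.
  rewrite diffmx_ext.
  have -> : \matrix_(i, k) ((w + t *: row i K) 0 k - w 0 k) = t *: K.
    by apply/matrixP => l q; rewrite !mxE addrAC subrr add0r.
  by rewrite (eqmx_scale _ (lt0r_neq0 t0)).
move=> m p Ap.
apply: mxrankS; rewrite sub_kermx; apply/eqP/matrixP => a k; rewrite !mxE.
under eq_bigr do rewrite !mxE.
case tk : (tA k); last by rewrite big1 // => q _; rewrite mulr0.
have := PR_eqs HA Hpr (Ap (lift ord0 a)) tk.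
have := PR_eqs HA Hpr (Ap ord0) tk.
rewrite /pairing => H1 H2.
by rewrite -[RHS](subrr (- cA (E k))) -{1}H2 -H1 -sumrB; apply: eq_bigr => q _; rewrite mulrBl.
Qed.

Section WithD2.
Hypothesis Dw : D i w.

Lemma dimB : PR' tA -> affdim BB (\rank MM).
Proof.
move=> Hpr.
set K := row_base MM.
have KK : (K <= MM)%MS by rewrite /K eq_row_base.
have rK : \rank K = \rank MM by rewrite /K eq_row_base.
clearbody K.
have [eps e0 He] := B_nbhd Dw Hpr.
have [t t0 Ht] := small_mx K e0.
split.
  exists (ext 0 (fun l => t *: row l K)); split.
    move=> u; case: (unliftP ord0 u) => [l ->|->]; rewrite ?extS ?ext0; last exact: BB0.
    apply: He.
      by apply: scalemx_sub; apply: submx_trans (row_sub l K) _.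
    by move=> q; rewrite !mxE subr0 normrM (gtr0_norm t0); exact: Ht.
  rewrite diffmx_ext.
  have -> : \matrix_(i, k) ((t *: row i K) 0 k - (0 : vec) 0 k) = t *: K.
    by apply/matrixP => l q; rewrite !mxE subr0.
  by rewrite (eqmx_scale _ (lt0r_neq0 t0)).
move=> m p Bp; apply: mxrankS; apply/row_subP => a.
have -> : row a (Defs.diffmx p) = p (lift ord0 a) - p ord0 by apply/rowP => q; rewrite !mxE.
apply: addmx_sub; first exact: BB_subM.
by rewrite -scaleN1r; apply: scalemx_sub; apply: BB_subM.
Qed.

End WithD2.

Lemma rank_sum : (\rank (kermx MM^T) + \rank MM)%N = d.
Proof. by rewrite mxrank_ker mxrank_tr subnK // rank_leq_col. Qed.

Lemma Aw_of_D : D i w -> AA w.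
Proof.
move=> Dw; apply/HA => k ke.
have := (D_Q i w).1 Dw k ke; rewrite cAE.
by have [s0 _ _] := sig_facts ke; lra.
Qed.

Lemma main_part : (relint AA w <-> (Dzero D i w /\ relint BB 0)) /\
  (relint AA w -> exists n m : nat, affdim AA n /\ affdim BB m /\ (n + m)%N = d).
Proof.
split.
  split.
    move=> RA; have Dw := relA_Di RA; split; first exact: Di_boundary.
    by apply: PR_relB Dw _; exact: R2 HA RA.1 RA.
  move=> [[Dw _] RB]; apply: (R1 HA (Aw_of_D Dw)); exact: relB_PR Dw RB.
move=> RA; have Dw := relA_Di RA; have Hpr := R2 HA RA.1 RA.
exists (\rank (kermx MM^T)), (\rank MM); split; first exact: dimA RA.1 Hpr.
split; [exact: dimB Dw Hpr|exact: rank_sum].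
Qed.

End Thm.
End Main.

Unset Implicit Arguments.

Theorem mainTheorem15 (R : realType) (d : nat) (Delta : pset R d)
    (e : seq 'rV[R]_d) (r : nat) (D : 'I_r -> pset R d)
    (J : {set 'I_r}) (i : 'I_r) (w : 'rV[R]_d) :
  reflexive_with_normals Delta e ->
  nef_partition Delta e D ->
  i \in J ->
  lattice w -> w != 0 ->
  let A := msum (D i :: [seq D j | j <- enum J]) in
  let B := msum [seq minface (nabla e D j) w | j <- enum (~: J)] in
  (relint A w <-> (Dzero D i w /\ relint B 0)) /\
  (relint A w -> exists n m : nat, affdim A n /\ affdim B m /\ (n + m)%N = d).
Proof.
move=> HR HN iJ lw w0 A B.
exact: (main_part HR HN iJ lw w0).
Qed.
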